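(* Let $F$ be a field of characteristic different from $2$, let $a_1,a_2\in F^\times$ be such that $E=F(\sqrt{a_1},\sqrt{a_2})$ is Galois over $F$ with $G=\mathrm{Gal}(E/F)\cong\mathbb Z/2\mathbb Z\times\mathbb Z/2\mathbb Z$, and let $\sigma_1,\sigma_2\in G$ be the generators with $\sigma_1(\sqrt{a_1})=\sqrt{a_1}$, $\sigma_1(\sqrt{a_2})=-\sqrt{a_2}$, $\sigma_2(\sqrt{a_2})=\sqrt{a_2}$, $\sigma_2(\sqrt{a_1})=-\sqrt{a_1}$. Then, in the $\mathbb Z[G]$-module $E^\times$, \[\ker(1-\sigma_1)(1-\sigma_2)=\ker(1-\sigma_1)\cdot\ker(1-\sigma_2).\]
   Context: $E^\times$ is a $\mathbb Z[G]$-module via $(\sum_g c_g g)\cdot\gamma=\prod_g g(\gamma)^{c_g}$. Thus $\ker(1-\sigma_i)=\{e\in E^\times: e/\sigma_i(e)=1\}$ and $\ker(1-\sigma_1)(1-\sigma_2)=\{e\in E^\times: e\,\sigma_1\sigma_2(e)=\sigma_1(e)\,\sigma_2(e)\}$. For subsets $A,B$, $A\cdot B=\{ab:a\in A,b\in B\}$. *)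

(* Defs.v *)
From HB Require Import structures.
From mathcomp Require Import all_boot all_order all_algebra all_fingroup all_solvable all_field.
Set Implicit Arguments. Unset Strict Implicit. Unset Printing Implicit Defensive.
Import GRing.Theory.
Local Open Scope ring_scope.

(* Z[G]-module structure on E^x, for a Galois automorphism group acting on L.
   ker(1 - s) = { e in E^x | e / s e = 1 } *)
Definition ker1m (F : fieldType) (L : splittingFieldType F)
  (s : gal_of {:L}) : pred L := fun e => (e != 0) && (e / s e == 1).

(* ker (1 - s1)(1 - s2) = { e in E^x | e * s1(s2 e) = s1 e * s2 e } *)
Definition ker2m (F : fieldType) (L : splittingFieldType F)
  (s1 s2 : gal_of {:L}) : pred L :=
  fun e => (e != 0) && (e * s1 (s2 e) == s1 e * s2 e).

Definition setmul (T : pzRingType) (A B : pred T) : T -> Prop :=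
  fun x => exists2 a, a \in A & exists2 b, b \in B & x = a * b.

(* Main.v *)
Require Import Defs.
From HB Require Import structures.
From mathcomp Require Import all_boot all_order all_algebra all_fingroup all_solvable all_field.
Import GRing.Theory.
Local Open Scope ring_scope.

Theorem corollary1 (F : fieldType) (L : splittingFieldType F)
  (hchar : (2 \notin [pchar F])%N)
  (a1 a2 : F) (ha1 : a1 != 0) (ha2 : a2 != 0)
  (r1 r2 : L) (hr1 : r1 ^+ 2 = a1%:A) (hr2 : r2 ^+ 2 = a2%:A)
  (hgen : << <<1%VS; r1>>; r2>>%VS = fullv)
  (hgal : galois 1%VS {:L})
  (hG : ('Gal({:L} / 1%VS) \isog [set: 'Z_2 * 'Z_2])%g)
  (s1 s2 : gal_of {:L})
  (h11 : s1 r1 = r1) (h12 : s1 r2 = - r2)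
  (h22 : s2 r2 = r2) (h21 : s2 r1 = - r1) :
  forall e : L, e \in ker2m s1 s2 <-> setmul (ker1m s1) (ker1m s2) e.
Proof.
have gal_gen_eq : forall x y : gal_of {:L}, x r1 = y r1 -> x r2 = y r2 -> x = y.
  move=> x y e1 e2; apply/eqP/gal_eqP => z _.
have : z \in << <<1%VS; r1>>; r2>>%VS by rewrite hgen memvf.
case/Fadjoin_polyP=> p Kp ->.
have gx : x \in 'Gal({:L} / 1%VS)%g by rewrite gal_kAut ?sub1v // kAut1E subvf.
have gy : y \in 'Gal({:L} / 1%VS)%g by rewrite gal_kAut ?sub1v // kAut1E subvf.
rewrite -!horner_map /= e2; congr (_.[_]).
apply/polyP=> i; rewrite !coef_map /=.
have : p`_i \in <<1%VS; r1>>%VS by apply: (polyOverP Kp).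
case/Fadjoin_polyP=> q Kq ->.
rewrite -!horner_map /= e1 !(fixedPoly_gal (sub1v _) _ Kq) //.
have s22 : forall z, s2 (s2 z) = z.
  move=> z; rewrite -galM ?memvf //.
  have -> : (s2 * s2)%g = 1%g.
    apply: gal_gen_eq; rewrite galM ?memvf // gal_id.
      change (s2 (s2 r1) = r1); apply: (etrans (congr1 (fun t => s2 t) h21)); rewrite rmorphN; apply: (etrans (congr1 -%R h21)); exact: opprK.
    change (s2 (s2 r2) = r2); apply: (etrans (congr1 (fun t => s2 t) h22)); exact: h22.
  by rewrite gal_id.
have s12 : forall z, s1 (s2 z) = s2 (s1 z).
  move=> z; rewrite -!galM ?memvf //.
  have -> : (s2 * s1)%g = (s1 * s2)%g.
    apply: gal_gen_eq; rewrite !galM ?memvf //.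
      change (s1 (s2 r1) = s2 (s1 r1)); apply: (etrans (congr1 (fun t => s1 t) h21)); rewrite rmorphN; apply: (etrans (congr1 -%R h11)); apply: esym; apply: (etrans (congr1 (fun t => s2 t) h11)); exact: h21.
    change (s1 (s2 r2) = s2 (s1 r2)); apply: (etrans (congr1 (fun t => s1 t) h22)); apply: (etrans h12); apply: esym; apply: (etrans (congr1 (fun t => s2 t) h12)); rewrite rmorphN; exact: (congr1 -%R h22).
  by [].
have r1n0 : r1 != 0.
  apply: contraNneq ha1 => r0; move: hr1; rewrite r0 expr0n /= => /esym/eqP.
  by rewrite scaler_eq0 oner_eq0 orbF.
have mM : forall (s : gal_of {:L}) x y, s (x * y) = s x * s y.
  by move=> s x y; exact: rmorphM.
have mV : forall (s : gal_of {:L}) x, s (x^-1) = (s x)^-1.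
  by move=> s x; exact: fmorphV.
have mD : forall (s : gal_of {:L}) x y, s (x + y) = s x + s y.
  by move=> s x y; exact: rmorphD.
have mN : forall (s : gal_of {:L}) x, s (- x) = - s x.
  by move=> s x; exact: rmorphN.
have m1 : forall (s : gal_of {:L}), s 1 = 1.
  by move=> s; exact: rmorph1.
have mz : forall (s : gal_of {:L}) x, (s x == 0) = (x == 0).
  by move=> s x; exact: fmorph_eq0.
have k1P : forall (s : gal_of {:L}) e, e \in ker1m s <-> e != 0 /\ s e = e.
  move=> s e; rewrite unfold_in /ker1m; split.
    case/andP=> ne0 /eqP h; split=> //; exact/esym/divr1_eq.
  case=> ne0 se; apply/andP; split=> //; by rewrite se divff.
move=> e; split.
- rewrite unfold_in /ker2m => /andP[en0 /eqP he].
  have s2en0 : s2 e != 0 by rewrite mz.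
  set c := e / s2 e.
  have cn0 : c != 0 by rewrite mulf_neq0 ?invr_eq0.
  have s1c : s1 c = c.
    rewrite /c mM mV s12; apply/eqP.
    rewrite eqr_div ?mz //; apply/eqP; rewrite -s12 -he; done.
  have s2c : s2 c = c^-1.
    by rewrite /c mM mV s22 invfM invrK mulrC.
  have [cm1|cm1] := eqVneq c (-1).
  + exists r1; first by apply/k1P; split=> //; exact: h11.
    exists (e / r1); last by rewrite mulrC divfK.
    apply/k1P; split; first by rewrite mulf_neq0 ?invr_eq0.
    have hs2e : s2 e = - e.
      move: cm1; rewrite /c => /(congr1 (fun t => t * s2 e)).
      by rewrite divfK // mulN1r => he2; rewrite {2}he2 opprK.
    rewrite mM mV hs2e.
    have -> : s2 r1 = - r1 by exact: h21.
    by rewrite invrN mulrNN.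
  + have bn0 : 1 + c != 0 by rewrite addrC addr_eq0.
    exists (1 + c); first by apply/k1P; rewrite mD m1 s1c.
    exists (e / (1 + c)); last by rewrite mulrC divfK.
    apply/k1P; split; first by rewrite mulf_neq0 ?invr_eq0.
    rewrite mM mV mD m1 s2c.
    have -> : 1 + c^-1 = (1 + c) / c by rewrite mulrDl divff // mul1r addrC.
    rewrite invfM invrK mulrA mulrAC; congr (_ * _).
    by rewrite /c mulrC divfK.
- case=> a /k1P[an0 s1a] [b /k1P[bn0 s2b] ->].
  rewrite unfold_in /ker2m mulf_neq0 //=.
  rewrite !mM s2b s1a s12 s1a.
  apply/eqP; rewrite -!mulrA; congr (_ * _).
  by rewrite (mulrCA b) (mulrCA (s1 b)) (mulrC b (s1 b)).
Qed.
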